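(* Let $L$ be a positive integer and let $\{a_i(k)\}_{i\in\mathbb Z_L}$, $k\in\mathcal K=\mathbb Z_L$, be binary sequences. Let $s\ge2$ be an integer and $W(s)\ge0$ a number such that for all distinct keys $k_1,\ldots,k_s\in\mathcal K$ and all bits $b_1,\ldots,b_s$, $$|A_{b_1\ldots b_s}(k_1,\ldots,k_s)|\le \frac{L}{2^s}+W(s).$$ Let $0<\gamma<1$ with $\gamma L$ an integer, and set $L'=L\bigl(1+2^sW(s)/L\bigr)=L+2^sW(s)$, $\gamma'=\gamma\bigl(1+2^sW(s)/L\bigr)^{-1}$ (so $\gamma'L'=\gamma L$). Let $r$ be the integer with $P_s(r)\le\gamma'/2<P_s(r+1)$. Then for every $T\subset\mathbb Z_L$ with $|T|=\gamma L$, every $g:T\to\{0,1\}$ and every $s$ distinct keys $k_1,\ldots,k_s$, $$\min_{1\le i\le s}\bigl|\{j\in T: g(j)=a_j(k_i)\}\bigr|\le n_{\rm correct}(\gamma,\varepsilon):=L'\Bigl\{P_{s-1}(r)+\frac{s-r-1}{s}\bigl(\gamma'-2P_s(r)\bigr)\Bigr\},$$ where $\varepsilon=s/|\mathcal K|$. Consequently, fewer than $s$ keys $k$ satisfy $|\{j\in T:g(j)=a_j(k)\}|>n_{\rm correct}(\gamma,\varepsilon)$, so for a uniformly random key the number of correctly guessed bits does not exceed $n_{\rm correct}(\gamma,\varepsilon)$ with probability at least $1-\varepsilon$.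
   Context: $\mathbb Z_L=\{0,\ldots,L-1\}$ is the residue ring modulo $L$. For distinct keys $k_1,\ldots,k_s$ and bits $b_1,\ldots,b_s$, $A_{b_1\ldots b_s}(k_1,\ldots,k_s)=\{i\in\mathbb Z_L: a_i(k_1)=b_1,\ldots,a_i(k_s)=b_s\}$. For integers $s\ge1$ and $t$, $P_s(t)=2^{-s}\sum_{u=0}^{t}\binom{s}{u}$ is the cumulative distribution function of a binomial random variable with $s$ trials and success probability $1/2$ ($P_s(t)=0$ for $t<0$). *)

(* Defs.v *)
From HB Require Import structures.
From mathcomp Require Import all_boot all_order all_algebra.
Set Implicit Arguments. Unset Strict Implicit. Unset Printing Implicit Defensive.
Import Order.TTheory GRing.Theory Num.Theory.
Local Open Scope ring_scope.

Definition Pbin (R : realFieldType) (s : nat) (t : int) : R :=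
  if t < 0 then 0
  else (\sum_(0 <= u < (absz t).+1) ('C(s, u))%:R) / 2%:R ^+ s.

(* A_{b_1..b_s}(k_1..k_s) for keys k : 'I_s -> 'I_L, bits b : 'I_s -> bool;
   a k i is the bit a_i(k). *)
Definition Aset (L s : nat) (a : 'I_L -> 'I_L -> bool)
  (k : 'I_s -> 'I_L) (b : 'I_s -> bool) : {set 'I_L} :=
  [set i : 'I_L | [forall j : 'I_s, a (k j) i == b j]].

Definition ncorr (L : nat) (a : 'I_L -> 'I_L -> bool) (T : {set 'I_L})
  (g : 'I_L -> bool) (k : 'I_L) : nat :=
  #|[set j in T | g j == a k j]|.

Definition Lp (R : realFieldType) (L s : nat) (W : R) : R := L%:R + 2%:R ^+ s * W.
Definition gammap (R : realFieldType) (L s : nat) (W gamma : R) : R :=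
  gamma / (1 + 2%:R ^+ s * W / L%:R).

Definition ncorrect (R : realFieldType) (L s : nat) (W gamma : R) (r : int) : R :=
  Lp L s W * (Pbin R s.-1 r
    + ((s%:Z - r - 1)%:~R / s%:R) * (gammap L s W gamma - 2%:R * Pbin R s r)).

(* Main.v *)
Require Import Defs.
From HB Require Import structures.
From mathcomp Require Import all_boot all_order all_algebra.
From mathcomp Require Import zify ring lra.
Set Implicit Arguments. Unset Strict Implicit. Unset Printing Implicit Defensive.
Import Order.TTheory GRing.Theory Num.Theory.

Lemma sum_bool_card (I : finType) (P : pred I) :
  (\sum_(i : I) (P i : nat) = #|[set i | P i]|)%N.
Proof.
rewrite -sum1_card [RHS]big_mkcond /=; apply: eq_bigr => i _.
by rewrite inE; case: (P i).
Qed.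

Lemma card_setin (I : finType) (T : {set I}) (P : pred I) :
  (#|[set j in T | P j]| = \sum_(j in T) (P j : nat))%N.
Proof.
rewrite -sum1_card big_mkcond [RHS]big_mkcond /=; apply: eq_bigr => i _.
by rewrite inE; case: (i \in T); case: (P i).
Qed.

Definition Bj (L s : nat) (a : 'I_L -> 'I_L -> bool) (k : 'I_s -> 'I_L) (j : 'I_L)
  : {set 'I_s} := [set i | a (k i) j].

Definition Hf (s m : nat) (B : {set 'I_s}) : nat := (#|B| - m + (#|~: B| - m))%N.

Lemma key_nat L (a : 'I_L -> 'I_L -> bool) s (k : 'I_s -> 'I_L) T g m :
  (\sum_i ncorr a T g (k i) <= m * #|T| + \sum_j Hf m (Bj a k j))%N.
Proof.
rewrite /ncorr.
under eq_bigr => i _ do rewrite card_setin.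
rewrite exchange_big /=.
apply: (@leq_trans (\sum_(j in T) (m + Hf m (Bj a k j)))).
  apply: leq_sum => j _.
  have -> : (\sum_i (g j == a (k i) j) = if g j then #|Bj a k j| else #|~: Bj a k j|)%N.
    rewrite sum_bool_card; case: (g j); apply/eq_card => i; rewrite !inE //.
  rewrite /Hf; case: (g j); lia.
rewrite big_split /= sum_nat_const mulnC leq_add2l.
by rewrite [X in (_ <= X)%N](bigID (fun j => j \in T)) /= leq_addr.
Qed.

Local Open Scope ring_scope.

Lemma key_R (R : realFieldType) L (a : 'I_L -> 'I_L -> bool) s (k : 'I_s -> 'I_L) m (c : R) :
  (forall b : 'I_s -> bool, (#|Aset a k b|)%:R <= c) ->
  ((\sum_j Hf m (Bj a k j))%:R : R) <= c * (\sum_(B : {set 'I_s}) Hf m B)%:R.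
Proof.
move=> hA.
rewrite (partition_big (fun j => Bj a k j) predT) //=.
rewrite !natr_sum mulr_sumr; apply: ler_sum => B _.
rewrite (eq_bigr (fun _ => Hf m B)); last by move=> j; rewrite ?andTb => /eqP ->.
rewrite (eq_bigl (fun j => j \in [set j | Bj a k j == B])); last by move=> j; rewrite inE ?andTb.
rewrite sum_nat_const natrM; apply: ler_wpM2r; first exact: ler0n.
have -> : [set j | Bj a k j == B] = Aset a k (fun i => i \in B).
  apply/setP => j; rewrite !inE; apply/eqP/forallP.
    by move=> <- i; rewrite inE.
  by move=> h; apply/setP => i; rewrite inE; exact/eqP.
exact: hA.
Qed.

Definition Sm (s m : nat) : nat := \sum_(w < s.+1) 'C(s, w) * (s - w - m).

Lemma sumHf s m : (\sum_(B : {set 'I_s}) Hf m B = 2 * Sm s m)%N.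
Proof.
rewrite /Hf big_split /= (reindex_inj (@setC_inj _)) /= -big_split /=.
under eq_bigr => B _ do rewrite addnn -mul2n.
rewrite -big_distrr /=; congr (2 * _)%N.
have hc (B : {set 'I_s}) : #|~: B| = (s - #|B|)%N.
  by have := cardsC B; rewrite card_ord; lia.
under eq_bigr => B _ do rewrite hc.
rewrite (partition_big (fun B : {set 'I_s} => inord #|B| : 'I_s.+1) predT) //=.
rewrite /Sm; apply: eq_bigr => w _.
have hB (B : {set 'I_s}) : (inord #|B| == w :> 'I_s.+1) = (#|B| == w).
  rewrite -val_eqE /= inordK //; rewrite ltnS; have := max_card B; by rewrite card_ord.
rewrite (eq_bigr (fun _ => s - w - m)%N); last by move=> B; rewrite ?andTb hB => /eqP ->.
rewrite (eq_bigl (fun B => B \in [set B : {set 'I_s} | #|B| == w])); last by move=> B; rewrite inE ?andTb hB.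
by rewrite sum_nat_const card_draws card_ord.
Qed.

Lemma nat_ident s n : (n < s)%N ->
  (s * \sum_(0 <= u < n.+1) 'C(s.-1, u) =
   (s - n.+1) * \sum_(0 <= u < n.+1) 'C(s, u) + Sm s (s - n.+1))%N.
Proof.
move=> hn.
have -> : Sm s (s - n.+1) = (\sum_(0 <= w < n.+1) 'C(s, w) * (n.+1 - w))%N.
  rewrite /Sm -(big_mkord xpredT (fun w => 'C(s, w) * (s - w - (s - n.+1))))%N.
  rewrite (big_cat_nat _ (n:=n.+1)) //=; last by lia.
  have -> : (\sum_(n.+1 <= i < s.+1) 'C(s, i) * (s - i - (s - n.+1)) = 0)%N.
    apply: big1_seq => w; rewrite mem_index_iota => /andP[_ /andP[hw _]].
    have -> : (s - w - (s - n.+1) = 0)%N by lia.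
    by rewrite muln0.
  rewrite addn0.
  apply: eq_big_nat => w /andP[_ hw]; congr (_ * _)%N; lia.
rewrite big_distrr /= big_distrr /= -big_split /=.
apply: eq_big_nat => u /andP[_ hu].
rewrite mul_bin_down.
have -> : (s - u = (s - n.+1) + (n.+1 - u))%N by lia.
by rewrite mulnDl [X in (_ + X)%N = _]mulnC.
Qed.

Lemma PbinP (R : realFieldType) s n :
  Pbin R s (Posz n) = (\sum_(0 <= u < n.+1) 'C(s, u))%:R / 2%:R ^+ s.
Proof. by rewrite /Pbin /= natr_sum. Qed.

Lemma PbinN (R : realFieldType) s n : Pbin R s (Negz n) = 0.
Proof. by rewrite /Pbin /=. Qed.

Lemma gammapLp (R : realFieldType) L s (W gamma : R) : (0 < L)%N -> 0 <= W ->
  gammap L s W gamma * Lp L s W = gamma * L%:R.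
Proof.
move=> hL hW.
have hL' : (L%:R : R) != 0 by rewrite pnatr_eq0 -lt0n.
have h2 : (0 : R) <= 2%:R ^+ s by apply: exprn_ge0.
have hd : (L%:R : R) + 2%:R ^+ s * W != 0.
  apply/lt0r_neq0; apply: ltr_wpDr; first exact: mulr_ge0.
  by rewrite ltr0n.
rewrite /gammap /Lp; field.
by rewrite hL' hd.
Qed.

Lemma ident (R : realFieldType) L s (W gamma : R) n : (0 < L)%N -> 0 <= W -> (n < s)%N ->
  s%:R * ncorrect L s W gamma (Posz n) =
  (s - n.+1)%:R * (gamma * L%:R) + (L%:R / 2%:R ^+ s + W) * (2 * Sm s (s - n.+1))%:R.
Proof.
move=> hL hW hn.
rewrite -(@gammapLp R L s W gamma) //.
have := nat_ident hn.
set A := (\sum_(0 <= u < n.+1) 'C(s.-1, u))%N.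
set B := (\sum_(0 <= u < n.+1) 'C(s, u))%N.
set S := Sm s (s - n.+1).
move=> /(congr1 (fun x => x%:R : R)); rewrite natrD !natrM => hA.
rewrite /ncorrect !PbinP -/A -/B.
have -> : ((s%:Z - n%:Z - 1)%:~R : R) = (s - n.+1)%:R.
  have -> : (s%:Z - n%:Z - 1 = Posz (s - n.+1)%N)%R by lia.
  by [].
set G := gammap L s W gamma.
have hs : (s%:R : R) != 0 by rewrite pnatr_eq0; lia.
have hP : (2%:R ^+ s.-1 : R) != 0 by rewrite expf_neq0 // pnatr_eq0.
have h2s : (2%:R ^+ s : R) = 2%:R * 2%:R ^+ s.-1 by rewrite -exprS prednK //; lia.
have hA' : (A%:R : R) = ((s - n.+1)%:R * B%:R + S%:R) / s%:R by rewrite -hA [s%:R * _]mulrC mulfK.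
rewrite hA' /Lp h2s.
field.
by rewrite hs hP.
Qed.

Lemma sum_bin_big s n : (s <= n)%N -> (2 ^ s <= \sum_(0 <= u < n.+1) 'C(s, u))%N.
Proof.
move=> hsn.
have -> : (2 ^ s = \sum_(0 <= u < s.+1) 'C(s, u))%N.
  rewrite [in LHS](_ : 2%N = (1 + 1)%N) // expnDn big_mkord; apply: eq_bigr => i _.
  by rewrite !exp1n !muln1.
rewrite (@big_cat_nat _ _ _ s.+1 0 n.+1) //=; first exact: leq_addr.
Qed.

Lemma gammap_bounds (R : realFieldType) L s (W gamma : R) : (0 < L)%N -> 0 <= W ->
  0 < gamma -> gamma < 1 -> 0 < gammap L s W gamma /\ gammap L s W gamma < 1.
Proof.
move=> hL hW hg0 hg1.
have hd : 1 <= 1 + 2%:R ^+ s * W / L%:R.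
  rewrite lerDl; apply: divr_ge0; [apply: mulr_ge0 => //; exact: exprn_ge0 | exact: ler0n].
have hd0 : 0 < 1 + 2%:R ^+ s * W / L%:R by apply: lt_le_trans hd; exact: ltr01.
split; first by apply: divr_gt0.
rewrite /gammap ltr_pdivrMr //; apply: lt_le_trans hg1 _.
by rewrite mul1r.
Qed.

Lemma sum_bound (R : realFieldType) (L : nat) (a : 'I_L -> 'I_L -> bool)
  (s : nat) (W gamma : R) (r : int) :
  (0 < L)%N -> (2 <= s)%N -> 0 <= W ->
  (forall (k : 'I_s -> 'I_L) (b : 'I_s -> bool), injective k ->
     (#|Aset a k b|)%:R <= L%:R / 2%:R ^+ s + W) ->
  0 < gamma -> gamma < 1 ->
  Pbin R s r <= gammap L s W gamma / 2%:R ->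
  gammap L s W gamma / 2%:R < Pbin R s (r + 1) ->
  forall (T : {set 'I_L}) (g : 'I_L -> bool),
    (#|T|)%:R = gamma * L%:R ->
  forall k : 'I_s -> 'I_L, injective k ->
    \sum_i ((ncorr a T g (k i))%:R : R) <= s%:R * ncorrect L s W gamma r.
Proof.
move=> hL hs hW hA hg0 hg1 hr1 hr2 T g hT k hk.
have [hG0 hG1] := @gammap_bounds R L s W gamma hL hW hg0 hg1.
set G := gammap L s W gamma in hr1 hr2 hG0 hG1.
rewrite -natr_sum.
case: r hr1 hr2 => [n|n] hr1 hr2.
- have hn : (n < s)%N.
    rewrite ltnNge; apply/negP => hsn.
    move: hr1; rewrite PbinP.
    have : 1 <= (\sum_(0 <= u < n.+1) 'C(s, u))%:R / (2%:R ^+ s : R).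
      rewrite ler_pdivlMr ?exprn_gt0 ?ltr0n // mul1r -natrX ler_nat.
      exact: sum_bin_big.
    move=> h1 h2; have := le_trans h1 h2.
    rewrite ler_pdivlMr ?ltr0n // mul1r => h3.
    have : G < 2%:R by apply: lt_trans hG1 _; rewrite ltr1n.
    by rewrite ltNge h3.
  rewrite ident //.
  have h := key_nat a k T g (s - n.+1); rewrite -(ler_nat R) in h; apply: (le_trans h).
  rewrite natrD natrM hT lerD2l.
  apply: le_trans; first apply: (key_R (s - n.+1)%N (hA k ^~ hk)).
  by rewrite sumHf.
- case: n hr1 hr2 => [|n] hr1 hr2; last first.
    have : Negz n.+1 + 1 = Negz n by rewrite !NegzE; lia.
    move=> e; move: hr2; rewrite e PbinN => h.
    have : 0 < G / 2%:R by apply: divr_gt0.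
    by rewrite ltNge (ltW h).
  have hnc : ncorrect L s W gamma (Negz 0) = gamma * L%:R.
    rewrite /ncorrect !PbinN -(@gammapLp R L s W gamma) //.
    have -> : (s%:Z - Negz 0 - 1 = Posz s)%R by rewrite NegzE; lia.
    have hs0 : (s%:R : R) != 0 by rewrite pnatr_eq0; lia.
    by rewrite mulr0 subr0 add0r -pmulrn mulfV // mul1r mulrC.
  rewrite hnc -hT -natrM ler_nat.
  apply: leq_trans (key_nat a k T g s) _.
  rewrite mulnC -[X in (_ <= X)%N]addn0 leq_add2l leqn0 sum_nat_eq0.
  apply/forallP => j; apply/implyP => _; rewrite /Hf.
  have h1 := max_card (Bj a k j); have h2 := max_card (~: Bj a k j).
  rewrite card_ord in h1 h2; apply/eqP; lia.
Qed.

Unset Implicit Arguments.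

Theorem corollary1 (R : realFieldType) (L : nat) (a : 'I_L -> 'I_L -> bool)
  (s : nat) (W gamma : R) (r : int) :
  (0 < L)%N -> (2 <= s)%N -> 0 <= W ->
  (forall (k : 'I_s -> 'I_L) (b : 'I_s -> bool), injective k ->
     (#|Aset a k b|)%:R <= L%:R / 2%:R ^+ s + W) ->
  0 < gamma -> gamma < 1 -> (exists m : int, gamma * L%:R = m%:~R) ->
  Pbin R s r <= gammap L s W gamma / 2%:R ->
  gammap L s W gamma / 2%:R < Pbin R s (r + 1) ->
  forall (T : {set 'I_L}) (g : 'I_L -> bool),
    (#|T|)%:R = gamma * L%:R ->
    (forall k : 'I_s -> 'I_L, injective k ->
       exists i : 'I_s, (ncorr a T g (k i))%:R <= ncorrect L s W gamma r)
    /\ (#|[set k : 'I_L | (((ncorr a T g k)%:R : R) > ncorrect L s W gamma r)%R]| < s)%N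
    /\ (1 : R) - s%:R / L%:R <=
         (#|[set k : 'I_L | (((ncorr a T g k)%:R : R) <= ncorrect L s W gamma r)%R]|)%:R
           / L%:R.
Proof.
move=> hL hs hW hA hg0 hg1 _ hr1 hr2 T g hT.
have part1 : forall k : 'I_s -> 'I_L, injective k ->
    exists i : 'I_s, ((ncorr a T g (k i))%:R : R) <= ncorrect L s W gamma r.
  move=> k hk.
  have hsum := @sum_bound R L a s W gamma r hL hs hW hA hg0 hg1 hr1 hr2 T g hT k hk.
  have s0 : (0 < s)%N by lia.
  pose i0 := Ordinal s0.
  exists [arg min_(i < i0) ncorr a T g (k i)].
  case: arg_minnP => // i _ hmin.
  have h : \sum_(j : 'I_s) ((ncorr a T g (k i))%:R : R) <= \sum_j ((ncorr a T g (k j))%:R : R).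
    by apply: ler_sum => j _; rewrite ler_nat hmin.
  rewrite sumr_const card_ord -[X in X <= _]mulr_natl in h.
  have h3 := le_trans h hsum.
  have hs0 : (0 : R) < s%:R by rewrite ltr0n.
  by rewrite (ler_pM2l hs0) in h3.
set bad := [set k : 'I_L | _].
have part2 : (#|bad| < s)%N.
  rewrite ltnNge; apply/negP => hle.
  pose k (i : 'I_s) := enum_val (widen_ord hle i).
  have hk : injective k.
    move=> x y /enum_val_inj /(congr1 val) /= h; exact: val_inj.
  have [i hi] := part1 k hk.
  have := enum_valP (widen_ord hle i).
  rewrite -/(k i) inE => h.
  by move: hi; rewrite leNgt h.
split => //; split => //.
set good := [set k : 'I_L | _].
have hg : good = ~: bad by apply/setP => x; rewrite !inE leNgt.
have hc : (#|good| + #|bad| = L)%N.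
  by rewrite hg addnC; have := cardsC bad; rewrite card_ord.
have hL0 : (L%:R : R) != 0 by rewrite pnatr_eq0; lia.
rewrite ler_pdivlMr ?ltr0n // mulrBl mul1r divfK //.
rewrite lerBlDr -natrD ler_nat; lia.
Qed.
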